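(* Let $G$ be a finite simple graph of order $n(G)$ that is neither edgeless nor complete, and let $\overline{G}$ be its complement. Then ${\rm vs}_{\chi}(G) + {\rm vs}_{\chi}(\overline{G}) \leq n(G) + 1$.
   Context: The chromatic vertex stability number ${\rm vs}_{\chi}(G)$ of a graph $G$ with at least one edge is the minimum number of vertices of $G$ whose deletion results in a graph $H$ with $\chi(H) = \chi(G)-1$, where $\chi$ denotes the chromatic number. *)

(* Defs.v *)
From mathcomp Require Import all_boot.
Set Implicit Arguments. Unset Strict Implicit. Unset Printing Implicit Defensive.

Definition simple_graph (T : finType) (e : rel T) : Prop :=
  symmetric e /\ irreflexive e.

Definition compl_rel (T : finType) (e : rel T) : rel T :=
  fun x y => (x != y) && ~~ e x y.

Definition has_edge (T : finType) (e : rel T) : bool := [exists x, exists y, e x y].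
Definition is_complete (T : finType) (e : rel T) : bool :=
  [forall x, forall y, (x != y) ==> e x y].

(* Colours are taken in 'I_(#|T|.+1), which loses no generality since any
   graph on at most #|T| vertices is coloured with at most #|T| colours. *)
Definition colorable (T : finType) (e : rel T) (S : {set T}) (k : nat) : bool :=
  [exists f : {ffun T -> 'I_(#|T|.+1)},
     [forall x in S, f x < k] &&
     [forall x in S, forall y in S, e x y ==> (f x != f y)]].

(* chromatic number of the subgraph induced by S: least k with a proper
   k-colouring (for simple graphs such k <= #|T| always exists). *)
Definition chi (T : finType) (e : rel T) (S : {set T}) : nat :=
  find (colorable e S) (iota 0 #|T|.+2).

Definition vs_chi (T : finType) (e : rel T) : nat :=
  find (fun m => [exists D : {set T},
          (#|D| == m) && (chi e (~: D) == (chi e setT).-1)])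
       (iota 0 #|T|.+2).

(* Main.v *)
Require Import Defs.
From mathcomp Require Import all_boot.
From mathcomp Require Import zify.
Set Implicit Arguments. Unset Strict Implicit. Unset Printing Implicit Defensive.

Section S.
Variable T : finType.

Lemma colorableP (e : rel T) (S : {set T}) k : reflect (exists f : {ffun T -> 'I_(#|T|.+1)},
   (forall x, x \in S -> f x < k) /\
   (forall x y, x \in S -> y \in S -> e x y -> f x != f y)) (colorable e S k).
Proof.
apply: (iffP existsP) => [[f /andP [/forall_inP H1 /forall_inP H2]] | [f [H1 H2]]];
  exists f.
  split=> // x y xS yS exy.
  have /forall_inP := H2 x xS.
  by move=> /(_ y yS) /implyP; apply.
apply/andP; split; apply/forall_inP => x xS; first exact: H1.
by apply/forall_inP => y yS; apply/implyP; exact: H2.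
Qed.

Lemma ordE n (a b : 'I_n) : (a == b) = (nat_of_ord a == nat_of_ord b).
Proof. by []. Qed.

Lemma find_iota_le (P : pred nat) N m : m < N -> P m -> find P (iota 0 N) <= m.
Proof.
move=> mN Pm; rewrite leqNgt; apply/negP => H.
have := before_find 0 H; rewrite nth_iota // add0n Pm //.
Qed.

Lemma colorable_full (e : rel T) (S : {set T}) : irreflexive e -> colorable e S #|T|.
Proof.
move=> irr; apply/colorableP.
exists [ffun x => widen_ord (leqnSn _) (enum_rank x)]; split.
  by move=> x _; rewrite ffunE /=.
move=> x y _ _ exy; rewrite !ffunE; apply/negP => /eqP H.
have : enum_rank x = enum_rank y by apply: val_inj; move: H => /(congr1 val).
move/enum_rank_inj => exy'; by rewrite exy' irr in exy.
Qed.

Lemma chi_spec (e : rel T) (S : {set T}) : irreflexive e ->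
  [/\ colorable e S (chi e S), chi e S <= #|T| &
      forall k, k < chi e S -> ~~ colorable e S k].
Proof.
move=> irr.
have Hle : chi e S <= #|T| by apply: find_iota_le => //; exact: colorable_full.
split => //.
  have Hh : has (colorable e S) (iota 0 #|T|.+2).
    apply/hasP; exists #|T|; last exact: colorable_full.
    rewrite mem_iota; lia.
  have := nth_find 0 Hh; rewrite nth_iota ?add0n //.
  by apply: leq_ltn_trans Hle _.
move=> k kc; have := before_find 0 kc.
have kT : k < #|T|.+2 by move: kc Hle; rewrite /chi; set q := find _ _; lia.
by rewrite nth_iota ?add0n // => ->.
Qed.

Lemma key (e : rel T) : irreflexive e -> has_edge e ->
  exists D : {set T}, 2 * #|D| <= #|T| /\ chi e (~: D) = (chi e setT).-1.
Proof.
move=> irr /existsP [x0 /existsP [y0 exy0]].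
have [colc cle cmin] := chi_spec setT irr.
set c := chi e setT in colc cle cmin *.
have cdef : chi e setT = c by [].
clearbody c.
move/colorableP: colc => [f [Hf1 Hf2]].
have c2 : 2 <= c.
  rewrite leqNgt; apply/negP => c1.
  have := Hf1 x0 (in_setT _); have := Hf1 y0 (in_setT _).
  have := Hf2 x0 y0 (in_setT _) (in_setT _) exy0.
  move: c1; case: (f x0) => [a ha]; case: (f y0) => [b hb] /=.
  rewrite -val_eqE /=; lia.
have cP := prednK (ltnW c2).
pose C (i : nat) := [set x | nat_of_ord (f x) == i].
have rem : forall i, i < c -> chi e (~: C i) = c.-1.
  move=> i ic.
  have iT : i < #|T|.+1.
    by apply: leq_trans ic _; apply: leq_trans cle _; exact: leqnSn.
  have [_ _ cmin'] := chi_spec (~: C i) irr.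
  apply/eqP; rewrite eqn_leq; apply/andP; split.
    apply: find_iota_le; first lia.
    apply/colorableP.
    exists [ffun x => if nat_of_ord (f x) == c.-1 then inord i else f x]; split.
      move=> x; rewrite !inE ffunE => Hx.
      case: eqP => H.
        rewrite inordK; first by move: Hx; rewrite H; lia.
        by apply: leq_trans ic _; apply: leq_trans cle _; exact: leqnSn.
      have := Hf1 x (in_setT _); lia.
    move=> x y; rewrite !inE !ffunE => Hx Hy exy.
    have := Hf2 x y (in_setT _) (in_setT _) exy.
    rewrite !ordE.
    case: ifP => H1; case: ifP => H2; rewrite ?(inordK iT); move/eqP: H1; move/eqP: H2; lia.
  rewrite leqNgt; apply/negP => Hlt.
  have [colc' _ _] := chi_spec (~: C i) irr.
  set k := chi e (~: C i) in colc' Hlt.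
  move/colorableP: colc' => [g [Hg1 Hg2]].
  have kT : k < #|T|.+1.
    apply: leq_trans Hlt _; apply: leq_trans (leq_pred c) _.
    by apply: leq_trans cle _; exact: leqnSn.
  have : colorable e setT k.+1.
    apply/colorableP.
    exists [ffun x => if x \in C i then inord k else g x]; split.
      move=> x _; rewrite ffunE; case: ifP => H.
        rewrite inordK //; lia.
      by apply: leq_trans (Hg1 x _) _ => //; rewrite inE H.
    move=> x y _ _ exy; rewrite !ffunE.
    have := Hf2 x y (in_setT _) (in_setT _) exy.
    have := Hg2 x y; rewrite !inE.
    case: (boolP (nat_of_ord (f x) == i)) => Hx; case: (boolP (nat_of_ord (f y) == i)) => Hy.
    - rewrite !ordE => _ H; move/eqP: Hx; move/eqP: Hy; move: H; lia.
    - move=> _ _; rewrite ordE (inordK kT).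
      have := Hg1 y; rewrite !inE Hy => /(_ isT); lia.
    - move=> _ _; rewrite ordE (inordK kT).
      have := Hg1 x; rewrite !inE Hx => /(_ isT); lia.
    - by move=> H _; apply: H.
  by apply/negP; apply: cmin; lia.
have disj : C 0 :&: C 1 = set0.
  apply/setP => x; rewrite !inE; case: (val (f x)) => [|[|n]] //.
have card01 : #|C 0| + #|C 1| <= #|T|.
  have := cardsUI (C 0) (C 1); rewrite disj cards0 addn0 => <-.
  exact: max_card.
case: (leqP #|C 0| #|C 1|) => H.
  exists (C 0); split; [lia | apply: rem; lia].
exists (C 1); split; [lia | apply: rem; lia].
Qed.

Lemma vs_half (e : rel T) : irreflexive e -> has_edge e -> 2 * vs_chi e <= #|T|.
Proof.
move=> irr he; have [D [HD1 HD2]] := key irr he.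
have : vs_chi e <= #|D|.
  apply: find_iota_le; first lia.
  by apply/existsP; exists D; rewrite eqxx HD2 eqxx.
lia.
Qed.

End S.

Theorem proposition5 (T : finType) (e : rel T) :
  simple_graph e -> has_edge e -> ~~ is_complete e ->
  vs_chi e + vs_chi (compl_rel e) <= #|T| + 1.
Proof.
move=> [_ irr] he hc.
have h1 := vs_half irr he.
have irr' : irreflexive (compl_rel e) by move=> x; rewrite /compl_rel eqxx.
have he' : has_edge (compl_rel e).
  move: hc; rewrite /is_complete negb_forall => /existsP [x].
  rewrite negb_forall => /existsP [y]; rewrite negb_imply => H.
  by apply/existsP; exists x; apply/existsP; exists y.
have h2 := vs_half irr' he'.
lia.
Qed.
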